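(* Let $r\ge 3$ and let $k_0,k_1,\dots,k_{r-1}$ be integers with $3\le k_0\le k_1\le \cdots \le k_{r-1}$. Then for every integer $m$ with $2\le m\le r-1$, \[ S(r;k_0,\dots,k_{r-1}) \ge \Bigl(\prod_{j=m}^{r-1}k_j\Bigr)\,S(m;k_0,\dots,k_{m-1}) -\sum_{i=m}^{r-1}\prod_{j=i+1}^{r-1}k_j, \] where an empty product is interpreted as $1$.
   Context: For an integer $k\ge 3$, let $\mathcal{L}(k)$ denote the equation $x_1+x_2+\cdots+x_{k-1}=x_k$ in positive integer variables (the $x_i$ need not be distinct). For $N\ge1$, write $[1,N]=\{1,2,\dots,N\}$. For integers $r\ge1$ and $k_0,\dots,k_{r-1}\ge 3$, the generalized Schur number $S(r;k_0,\dots,k_{r-1})$ is the least positive integer $N$ such that for every coloring $\Delta:[1,N]\to\{0,1,\dots,r-1\}$ there exist some $i\in\{0,\dots,r-1\}$ and positive integers $x_1,\dots,x_{k_i}\in[1,N]$ satisfying $\mathcal{L}(k_i)$ with $\Delta(x_1)=\cdots=\Delta(x_{k_i})=i$. *)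

(* Defs.v *)
From mathcomp Require Import all_boot.
Set Implicit Arguments. Unset Strict Implicit. Unset Printing Implicit Defensive.

(* The sequence k_0, k_1, ... is given as k : nat -> nat; only k i for
   i < r matters.  A colouring of [1,N] with r colours is a function
   c : nat -> 'I_r (only its values on [1,N] matter). *)

Definition has_mono_sol (r : nat) (k : nat -> nat) (N : nat) : Prop :=
  forall c : nat -> 'I_r,
    exists i : 'I_r, exists x : nat -> nat,
      (forall j, j < k i -> (1 <= x j <= N) /\ c (x j) = i) /\
      \sum_(j < (k i).-1) x j = x (k i).-1.

Definition is_schur_number (r : nat) (k : nat -> nat) (S : nat) : Prop :=
  0 < S /\ has_mono_sol r k S /\
  (forall N, 0 < N -> N < S -> ~ has_mono_sol r k N).

(* Main.v *)
Require Import Defs.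
From mathcomp Require Import all_boot zify.

Lemma mono_sol t k N N' : N <= N' -> has_mono_sol t k N -> has_mono_sol t k N'.
Proof.
move=> le H c; have [i [x [Hx Heq]]] := H c; exists i, x; split=> // j /Hx [/andP[a b] e].
by split=> //; apply/andP; split=> //; apply: leq_trans le.
Qed.

Lemma step t (k : nat -> nat) N :
  0 < t -> (forall i, i <= t -> 2 <= k i) -> (forall i, i < t -> k i <= k t) ->
  ~ has_mono_sol t k N -> ~ has_mono_sol t.+1 k (k t * N.+1 - 2).
Proof.
move=> t0 k2 kle Hn Hm; apply: Hn => c.
have kt2 := k2 t (leqnn t).
set D := (k t).-1 * N.+1 - 1.
have HM : k t * N.+1 - 2 = D + N by rewrite /D; nia.
have DN : N <= D by rewrite /D; nia.
pose c2 := fun y : nat => if y <= N then widen_ord (leqnSn t) (c y)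
  else if y <= D then (ord_max : 'I_t.+1) else widen_ord (leqnSn t) (c (y - D)).
have [i [x [Hx Heq]]] := Hm c2.
rewrite HM in Hx.
case: (ltnP i t) => [it | ti].
- exists (Ordinal it).
  exists (fun j => if N < x j then x j - D else x j).
  have Hl : forall j, j < k i -> (1 <= (if N < x j then x j - D else x j) <= N /\
        c (if N < x j then x j - D else x j) = Ordinal it) /\
        x j = (if N < x j then x j - D else x j) + D * (N < x j).
    move=> j /Hx [/andP[a b]]; rewrite /c2.
    case: (leqP (x j) N) => h1.
      move=> e.
      rewrite muln0 addn0; split=> //; split; first by rewrite a h1.
      by apply: val_inj; rewrite /= -e.
    case: (leqP (x j) D) => h2.
      by move=> e; exfalso; move: (it); rewrite -e /= ltnn.
    move=> e; rewrite muln1; split; last by lia.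
    split; first by lia.
    by apply: val_inj; rewrite /= -e.
  have ki2 := k2 i (ltnW it).
  split.
    move=> j jl; exact: (Hl j jl).1.
  rewrite /=.
  set n := (k i).-1 in Heq *.
  have nlt : n < k i by rewrite /n; lia.
  set x' := (fun j => if N < x j then x j - D else x j).
  have Hs : \sum_(j < n) x j = \sum_(j < n) x' j + D * \sum_(j < n) (N < x j).
    rewrite big_distrr -big_split; apply: eq_bigr => j _.
    have jl : j < k i by apply: leq_trans (ltn_ord j) (ltnW nlt).
    exact: (Hl j jl).2.
  have sup : \sum_(j < n) x' j <= n * N.
    have -> : n * N = \sum_(j < n) N by rewrite sum_nat_const card_ord.
    apply: leq_sum => j _.
    have jl : j < k i by apply: leq_trans (ltn_ord j) (ltnW nlt).
    by case/andP: (Hl j jl).1.1.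
  have slo : 1 <= \sum_(j < n) x' j.
    have n0 : 0 < n by rewrite /n; lia.
    rewrite (bigD1 (Ordinal n0)) //=.
    by case/andP: (Hl 0 (ltn_trans n0 nlt)).1.1 => a _; apply: leq_trans a (leq_addr _ _).
  have [[/andP[l1 l2] _] xn] := Hl n nlt.
  have kik := kle i it.
  set S := \sum_(j < n) x' j in sup slo Hs *.
  set h := \sum_(j < n) (N < x j) in Hs.
  have e1 : S + D * h = x' n + D * (N < x n) by rewrite -Hs Heq.
  have l1' : 0 < x' n := l1.
  have l2' : x' n <= N := l2.
  clear l1 l2 xn Heq Hs Hl.
  suff : S = x' n by [].
  rewrite -/S.
  move: (x' n) (N < x n) l1' l2' e1 => y [] /= l1 l2 e1.
    case: (posnP h) => [h0|hp].
      move: e1; rewrite h0 muln0 addn0 muln1 => e; exfalso.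
      have : (k t).-1 * N.+1 <= n * N by rewrite /D in e; lia.
      rewrite /n; nia.
    case: (ltnP 1 h) => [h2|h1].
      have : D * 2 <= D * h by rewrite leq_mul2l h2 orbT.
      lia.
    have h1' : h = 1 by lia.
    move: e1; rewrite h1'; lia.
  case: (posnP h) => [h0|hp]; first by move: e1; rewrite h0; lia.
  have : D <= D * h by rewrite leq_pmulr.
  lia.
- have it : nat_of_ord i = t by apply/eqP; rewrite eqn_leq ti -ltnS ltn_ord.
  have Hmid : forall j, j < k i -> N < x j <= D.
    move=> j /Hx [_]; rewrite /c2.
    case: (leqP (x j) N) => h1.
      by move=> e; have := ltn_ord (c (x j)); rewrite (_ : nat_of_ord (c (x j)) = nat_of_ord i); [rewrite it ltnn | rewrite -e].
    case: (leqP (x j) D) => h2; first by [].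
    by move=> e; have := ltn_ord (c (x j - D)); rewrite (_ : nat_of_ord (c (x j - D)) = nat_of_ord i); [rewrite it ltnn | rewrite -e].
  rewrite it in Hmid Heq.
  set n := (k t).-1 in Heq *.
  have nlt : n < k t by rewrite /n; lia.
  have : n * N.+1 <= \sum_(j < n) x j.
    have -> : n * N.+1 = \sum_(j < n) N.+1 by rewrite sum_nat_const card_ord.
    apply: leq_sum => j _.
    by case/andP: (Hmid j (leq_trans (ltn_ord j) (ltnW nlt))).
  rewrite Heq; case/andP: (Hmid n nlt) => _.
  rewrite /D /n; lia.
Qed.

Lemma kmono (r : nat) (k : nat -> nat) :
  (forall i, i.+1 < r -> k i <= k i.+1) -> forall i j, i <= j -> j < r -> k i <= k j.
Proof.
move=> H i j ij; elim: j ij => [|j IH] ij jr.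
  by rewrite leqn0 in ij; rewrite (eqP ij).
case: (leqP i j) => h.
  by apply: leq_trans (IH h (ltnW jr)) (H j jr).
have -> : i = j.+1 by lia.
by [].
Qed.

Theorem theorem4 (r : nat) (k : nat -> nat) (m Sr Sm : nat) :
  3 <= r ->
  3 <= k 0 ->
  (forall i, i.+1 < r -> k i <= k i.+1) ->
  2 <= m <= r - 1 ->
  is_schur_number r k Sr ->
  is_schur_number m k Sm ->
  (\prod_(m <= j < r) k j) * Sm - \sum_(m <= i < r) \prod_(i.+1 <= j < r) k j
    <= Sr.
Proof.
move=> r3 k3 Hk /andP[m2 mr] [Sr0 [HSr _]] [Sm0 [_ HSm]].
have km := @kmono r k Hk.
have k2 : forall i, i < r -> 2 <= k i.
  by move=> i ir; apply: leq_trans (km 0 i (leq0n _) ir); apply: ltnW.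
have base : ~ has_mono_sol m k Sm.-1.
  case: (posnP Sm.-1) => [->|p].
    have m0 : 0 < m by lia.
    move=> H; have [i [x [Hx _]]] := H (fun _ => Ordinal m0).
    have ir : nat_of_ord i < r by apply: leq_trans (ltn_ord i) _; lia.
    have := Hx 0 (leq_trans (isT : 0 < 2) (k2 _ ir)).
    by case=> /andP[a b]; move: (leq_trans a b).
  by apply: HSm => //; lia.
suff inv : forall d, m + d <= r -> exists N, ~ has_mono_sol (m + d) k N /\
   N + 1 + \sum_(m <= i < m + d) \prod_(i.+1 <= j < m + d) k j
     = (\prod_(m <= j < m + d) k j) * Sm.
  have [N [HN e]] := inv (r - m) ltac:(lia).
  rewrite (_ : m + (r - m) = r) in HN e; last by lia.
  rewrite -e.
  case: (leqP (N + 1) Sr) => h; first by lia.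
  exfalso; apply: HN; apply: mono_sol HSr; lia.
elim=> [|d IH] hd.
  exists Sm.-1; rewrite addn0 big_geq // big_geq // mul1n; split => //; lia.
have [N [HN e]] := IH ltac:(lia).
exists (k (m + d) * N.+1 - 2).
have kd2 : 2 <= k (m + d) by apply: k2; lia.
split.
  rewrite addnS; apply: step => //; first by lia.
    by move=> i id; apply: k2; lia.
  by move=> i id; apply: km; lia.
rewrite (_ : m + d.+1 = (m + d).+1); last by rewrite addnS.
rewrite big_nat_recr /=; last by lia.
rewrite [\prod_((m + d).+1 <= j < _) _]big_geq // (big_nat_recr (m + d) m k) ?leq_addr //=.
rewrite (eq_big_nat _ _ (F2 := fun i => (\prod_(i.+1 <= j < m + d) k j) * k (m + d))); last first.
  by move=> i /andP[_ h]; rewrite big_nat_recr.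
rewrite -big_distrl /= mulnAC -e.
set Q := \sum_(_ <= _ < _ ) _.
nia.
Qed.
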